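(* Let $(u_\beta)_{\beta<\alpha}$, with $\alpha\ge1$, be a densely non-increasing sequence of prime words. Then $u_0$ is the longest prime prefix of the product $\prod_{\beta<\alpha}u_\beta$.
   Context: $A$ is a finite alphabet with a linear order $<_A$. Words are sequences of letters indexed by countable ordinals; $\prod$ denotes ordered concatenation and $x^\alpha$ the concatenation of $\alpha$ copies of $x$. A prefix of $x$ is $x[0,\gamma)$, a suffix is $x[\gamma,|x|)$, proper if $0<\gamma<|x|$. Write $x<_{str}x'$ if there are letters $a<_Ab$ and words $y,z,z'$ with $x=yaz$, $x'=ybz'$; $x\le_{lex}x'$ iff $x$ is a prefix of $x'$ or $x<_{str}x'$. A word is primitive if $x=y^\alpha$ implies $\alpha=1$ and $y=x$; $w$ is prime if it is primitive and every proper suffix $z$ satisfies $w\le_{lex}z$. A sequence $(u_\beta)_{\beta<\alpha}$ of words is densely non-increasing if for all $\gamma<\gamma'\le\alpha$, either $u_\beta=u_\gamma$ for all $\gamma\le\beta<\gamma'$, or there exist $\gamma\le\beta<\beta'<\gamma'$ with $u_\beta>_{lex}u_{\beta'}$. *)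

(* Defs.v *)
(* Transfinite words over a finite linearly ordered alphabet,
   represented as countable well-ordered carriers with a labelling; words are
   compared up to order-and-label isomorphism ([weq]). *)
From mathcomp Require Import all_boot all_order.
Set Implicit Arguments. Unset Strict Implicit. Unset Printing Implicit Defensive.

Definition is_cwo (T : Type) (lt : T -> T -> Prop) : Prop :=
  [/\ exists f : T -> nat, injective f,
      (forall a, ~ lt a a),
      (forall a b c, lt a b -> lt b c -> lt a c),
      (forall a b, a <> b -> lt a b \/ lt b a)
    & well_founded lt].

Section Words.
Context {d : Order.disp_t} {A : finOrderType d}.

Record word := Word { wcar : Type; wlt : wcar -> wcar -> Prop; wlab : wcar -> A }.

Definition is_word (x : word) : Prop := is_cwo (@wlt x).

Definition weq (x y : word) : Prop :=
  exists f : wcar x -> wcar y,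
    [/\ bijective f,
        (forall a b, wlt a b <-> wlt (f a) (f b))
      & (forall a, wlab (f a) = wlab a)].

Definition nonempty_word (x : word) : Prop := inhabited (wcar x).

Definition letter (a : A) : word := @Word unit (fun _ _ => False) (fun _ => a).

Definition wcat (x y : word) : word :=
  @Word (wcar x + wcar y)%type
    (fun p q => match p, q with
                | inl a, inl b => wlt a b
                | inl _, inr _ => True
                | inr _, inl _ => False
                | inr a, inr b => wlt a b
                end)
    (fun p => match p with inl a => wlab a | inr b => wlab b end).

Definition wprod (I : Type) (ltI : I -> I -> Prop) (u : I -> word) : word :=
  @Word {i : I & wcar (u i)}
    (fun p q => ltI (projT1 p) (projT1 q) \/
       exists i (a b : wcar (u i)),
         [/\ p = existT _ i a, q = existT _ i b & wlt a b])
    (fun p => wlab (projT2 p)).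

Definition wpow (J : Type) (ltJ : J -> J -> Prop) (y : word) : word :=
  wprod ltJ (fun _ => y).

Definition is_prefix (p x : word) : Prop :=
  exists z, is_word z /\ weq x (wcat p z).
Definition is_proper_suffix (z x : word) : Prop :=
  exists p, [/\ is_word p, nonempty_word p, nonempty_word z & weq x (wcat p z)].

Definition strlt (x x' : word) : Prop :=
  exists (a b : A) (y z z' : word),
    [/\ (a < b)%O, is_word y, is_word z, is_word z' &
        weq x (wcat (wcat y (letter a)) z) /\
        weq x' (wcat (wcat y (letter b)) z')].

Definition lexle (x x' : word) : Prop := is_prefix x x' \/ strlt x x'.
Definition lexlt (x x' : word) : Prop := lexle x x' /\ ~ weq x x'.

Definition primitive (x : word) : Prop :=
  forall (J : Type) (ltJ : J -> J -> Prop) (y : word),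
    is_cwo ltJ -> is_word y -> weq x (wpow ltJ y) ->
    (exists j0 : J, forall j, j = j0) /\ weq y x.

Definition prime_word (w : word) : Prop :=
  primitive w /\ forall z, is_word z -> is_proper_suffix z w -> lexle w z.

(* densely non-increasing sequence (u_beta)_{beta < alpha}, with the index
   ordinal alpha given as (I, ltI); the upper bound gamma' <= alpha is an
   element of [option I], [None] standing for alpha itself *)
Definition below (I : Type) (ltI : I -> I -> Prop) (b : I) (g' : option I) : Prop :=
  match g' with Some g => ltI b g | None => True end.

Definition dense_nonincr (I : Type) (ltI : I -> I -> Prop) (u : I -> word) : Prop :=
  forall (g : I) (g' : option I), below ltI g g' ->
    (forall b, (b = g \/ ltI g b) -> below ltI b g' -> weq (u b) (u g)) \/
    (exists b b', [/\ b = g \/ ltI g b, ltI b b', below ltI b' g'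
                   & lexlt (u b') (u b)]).

End Words.

(* Main.v *)
Require Import Defs.
From mathcomp Require Import all_boot all_order.
From Stdlib Require Import Classical ClassicalEpsilon ProofIrrelevance Eqdep Wellfounded.
Set Implicit Arguments. Unset Strict Implicit. Unset Printing Implicit Defensive.
Import Order.TTheory.


Lemma cwo_inv (T T' : Type) (lt : T -> T -> Prop) (f : T' -> T) :
  is_cwo lt -> injective f -> is_cwo (fun a b => lt (f a) (f b)).
Proof.
  move=> [[g hg] hirr htr htot hwf] hf; split.
  - exists (fun a => g (f a)) => a b h; apply: hf; exact: hg.
  - move=> a; exact: hirr.
  - move=> a b c; exact: htr.
  - move=> a b hab; apply: htot => h; apply: hab; exact: hf.
  - exact: Inverse_Image.wf_inverse_image.
Qed.

Lemma cwo_tot T (lt : T -> T -> Prop) : is_cwo lt -> forall a b, lt a b \/ a = b \/ lt b a.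
Proof.
  move=> [_ _ _ H _] a b; case: (classic (a = b)) => [->|/H[]]; tauto.
Qed.

Lemma cwo_min T (lt : T -> T -> Prop) : is_cwo lt -> forall P : T -> Prop,
  (exists a, P a) -> exists m, P m /\ forall a, P a -> ~ lt a m.
Proof.
  move=> hc P [a Pa]; case: (hc) => _ _ _ _ hwf.
  apply: NNPP => hn.
  suff H : forall b, Acc lt b -> ~ P b by exact: H a (hwf a) Pa.
  move=> b acc; elim: acc => {}b _ IH Pb; apply: hn; exists b; split => // c Pc hcb.
  exact: IH c hcb Pc.
Qed.

Section Gen.
Context {d : Order.disp_t} {A : finOrderType d}.
Local Notation wd := (@word d A).

Section W1.
Variable x : wd.
Hypothesis hx : is_word x.
Lemma w_irr (a : wcar x) : ~ wlt a a.
Proof. by case: hx => _ h _ _ _; apply: h. Qed.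
Lemma w_trans (a b c : wcar x) : wlt a b -> wlt b c -> wlt a c.
Proof. by case: hx => _ _ h _ _; apply: h. Qed.
Lemma w_tot (a b : wcar x) : wlt a b \/ a = b \/ wlt b a.
Proof. exact: cwo_tot hx a b. Qed.
Lemma w_asym (a b : wcar x) : wlt a b -> wlt b a -> False.
Proof. move=> h1 h2; apply: (@w_irr a); exact: w_trans h1 h2. Qed.
Lemma w_wf : well_founded (@wlt d A x).
Proof. by case: hx. Qed.
Lemma w_min (P : wcar x -> Prop) : (exists a, P a) -> exists m, P m /\ forall a, P a -> ~ wlt a m.
Proof. exact: (@cwo_min _ (@wlt d A x) hx P). Qed.
Lemma w_le_of_not (a b : wcar x) : ~ wlt b a -> a = b \/ wlt a b.
Proof. case: (w_tot a b); tauto. Qed.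
End W1.

Definition wsub (x : wd) (S : wcar x -> Prop) : wd :=
  @Word d A {a : wcar x | S a} (fun a b => wlt (proj1_sig a) (proj1_sig b))
     (fun a => wlab (proj1_sig a)).

Lemma is_word_sub x S : is_word x -> is_word (@wsub x S).
Proof.
  move=> hx; apply: (cwo_inv (f := @proj1_sig _ S)) => //.
  move=> [a ha] [b hb] /= e; subst; f_equal; exact: proof_irrelevance.
Qed.

Lemma sub_eq x S (a b : wcar (@wsub x S)) : proj1_sig a = proj1_sig b -> a = b.
Proof. move: a b => [a ha] [b hb] /= e; subst; f_equal; exact: proof_irrelevance. Qed.

(* partial isomorphisms between initial segments *)
Definition piso (x y : wd) (R : wcar x -> wcar y -> Prop) :=
 [/\ (forall a b a' b', R a b -> R a' b' -> (wlt a a' <-> wlt b b')),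
     (forall a b a', R a b -> wlt a' a -> exists b', R a' b'),
     (forall a b b', R a b -> wlt b' b -> exists a', R a' b') &
     (forall a b, R a b -> wlab a = wlab b)].

Definition pfull (x y : wd) (R : wcar x -> wcar y -> Prop) := forall a, exists b, R a b.
Definition psurj (x y : wd) (R : wcar x -> wcar y -> Prop) := forall b, exists a, R a b.
Definition rinv (x y : wd) (R : wcar x -> wcar y -> Prop) := fun b a => R a b.
Definition rcomp (x y z : wd) (R1 : wcar x -> wcar y -> Prop) (R2 : wcar y -> wcar z -> Prop) :=
  fun a c => exists b, R1 a b /\ R2 b c.

Lemma piso_inv x y R : @piso x y R -> piso (rinv R).
Proof.
  move=> [h1 h2 h3 h4]; split; rewrite /rinv.
  - move=> a b a' b' H H'; apply: iff_sym; exact: h1.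
  - move=> a b a' H H'; exact: h3 H H'.
  - move=> a b b' H H'; exact: h2 H H'.
  - move=> a b H; symmetry; exact: h4.
Qed.

Lemma piso_rcomp x y z R1 R2 : @piso x y R1 -> @piso y z R2 -> piso (rcomp R1 R2).
Proof.
  move=> [h1 h2 h3 h4] [k1 k2 k3 k4]; split; rewrite /rcomp.
  - move=> a c a' c' [b [H1 H2]] [b' [H1' H2']].
    rewrite (h1 _ _ _ _ H1 H1'); exact: k1.
  - move=> a c a' [b [H1 H2]] hlt.
    have [b' Hb'] := h2 _ _ _ H1 hlt.
    have hb : wlt b' b by apply/(h1 _ _ _ _ Hb' H1).
    have [c' Hc'] := k2 _ _ _ H2 hb.
    by exists c', b'.
  - move=> a c c' [b [H1 H2]] hlt.
    have [b' Hb'] := k3 _ _ _ H2 hlt.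
    have hb : wlt b' b by apply/(k1 _ _ _ _ Hb' H2).
    have [a' Ha'] := h3 _ _ _ H1 hb.
    by exists a', b'.
  - move=> a c [b [H1 H2]]; rewrite (h4 _ _ H1); exact: k4.
Qed.

Lemma piso_eq x : piso (fun a b : wcar x => a = b).
Proof.
  split.
  - by move=> a b a' b' -> ->.
  - by move=> a b a' _ _; exists a'.
  - by move=> a b b' _ _; exists b'.
  - by move=> a b ->.
Qed.

Definition rst (x y : wd) (R : wcar x -> wcar y -> Prop) (D : wcar x -> Prop) :=
  fun a b => R a b /\ D a.

Lemma piso_rst x y R D : @piso x y R -> (forall a a', D a -> wlt a' a -> D a') ->
  piso (rst R D).
Proof.
  move=> [h1 h2 h3 h4] hD; split; rewrite /rst.
  - move=> a b a' b' [H _] [H' _]; exact: h1.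
  - move=> a b a' [H Da] hlt; have [b' Hb'] := h2 _ _ _ H hlt.
    exists b'; split => //; exact: hD hlt.
  - move=> a b b' [H Da] hlt; have [a' Ha'] := h3 _ _ _ H hlt.
    exists a'; split => //; apply: hD Da _; apply/(h1 _ _ _ _ Ha' H); done.
  - move=> a b [H _]; exact: h4.
Qed.

Section Words2.
Variables x y : wd.
Hypotheses (hx : is_word x) (hy : is_word y).

Lemma piso_func R : @piso x y R -> forall a b b', R a b -> R a b' -> b = b'.
Proof.
  move=> [h1 _ _ _] a b b' H H'.
  case: (w_tot hy b b') => [hl|[//|hl]].
  - by have := w_irr hx (a := a); rewrite (h1 _ _ _ _ H H').
  - by have := w_irr hx (a := a); rewrite (h1 _ _ _ _ H' H).
Qed.

Lemma piso_inj R : @piso x y R -> forall a a' b, R a b -> R a' b -> a = a'.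
Proof.
  move=> [h1 _ _ _] a a' b H H'.
  case: (w_tot hx a a') => [hl|[//|hl]].
  - by have := w_irr hy (a := b); rewrite -(h1 _ _ _ _ H H').
  - by have := w_irr hy (a := b); rewrite -(h1 _ _ _ _ H' H).
Qed.

Lemma agree R1 R2 : @piso x y R1 -> @piso x y R2 ->
  forall a b1 b2, R1 a b1 -> R2 a b2 -> b1 = b2.
Proof.
  move=> P1 P2; have P1' := P1; have P2' := P2.
  case: P1' => [h1 h2 h3 h4]; case: P2' => [k1 k2 k3 k4].
  move=> a; elim: (w_wf hx a) => {}a _ IH b1 b2 H1 H2.
  case: (w_tot hy b1 b2) => [hl|[//|hl]].
  - have [a' Ha'] := k3 _ _ _ H2 hl.
    have ha : wlt a' a by apply/(k1 _ _ _ _ Ha' H2).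
    have [c Hc] := h2 _ _ _ H1 ha.
    have e := IH _ ha _ _ Hc Ha'; subst c.
    have e := piso_inj P1 Hc H1; subst a'.
    by case: (w_irr hx ha).
  - have [a' Ha'] := h3 _ _ _ H1 hl.
    have ha : wlt a' a by apply/(h1 _ _ _ _ Ha' H1).
    have [c Hc] := k2 _ _ _ H2 ha.
    have e := IH _ ha _ _ Ha' Hc; subst c.
    have e := piso_inj P2 Hc H2; subst a'.
    by case: (w_irr hx ha).
Qed.

Lemma ext R1 R2 (a : wcar x) (b c : wcar y) : piso R1 -> piso R2 ->
  (forall a', (exists b', R1 a' b') <-> wlt a' a) ->
  (forall b', (exists a', R1 a' b') <-> wlt b' b) ->
  R2 a c -> c = b.
Proof.
  move=> P1 P2 hd hr H2; have P2' := P2; case: P2' => [k1 k2 k3 k4].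
  case: (w_tot hy c b) => [hl|[//|hl]].
  - have [a' Ha'] := (proj2 (hr c)) hl.
    have ha : wlt a' a by apply/(hd a'); exists c.
    have [c' Hc'] := k2 _ _ _ H2 ha.
    have e := agree P1 P2 Ha' Hc'; subst c'.
    have e := piso_inj P2 Hc' H2; subst a'.
    by case: (w_irr hx ha).
  - have [a' Ha'] := k3 _ _ _ H2 hl.
    have ha : wlt a' a by apply/(k1 _ _ _ _ Ha' H2).
    have [c' Hc'] := (proj2 (hd a')) ha.
    have e := agree P1 P2 Hc' Ha'; subst c'.
    have hbb : wlt b b by apply/(hr b); exists a'.
    by case: (w_irr hy hbb).
Qed.

End Words2.
End Gen.
Arguments wsub {d A} x S.


Section Gen2.
Context {d : Order.disp_t} {A : finOrderType d}.
Local Notation wd := (@word d A).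

Definition pre (x y : wd) := exists R : wcar x -> wcar y -> Prop, piso R /\ pfull R.
Definition pstr (x y : wd) := exists (R : wcar x -> wcar y -> Prop) (a : wcar x) (b : wcar y),
  [/\ piso R, (forall a', (exists b', R a' b') <-> wlt a' a),
      (forall b', (exists a', R a' b') <-> wlt b' b) & (wlab a < wlab b)%O].
Definition ple x y := pre x y \/ pstr x y.

Lemma lab_lt_irr (a : A) : ~ (a < a)%O.
Proof. by rewrite ltxx. Qed.
Lemma lab_lt_trans (a b c : A) : (a < b)%O -> (b < c)%O -> (a < c)%O.
Proof. exact: lt_trans. Qed.

Lemma pre_refl x : pre x x.
Proof. exists (fun a b => a = b); split; [exact: piso_eq | by move=> a; exists a]. Qed.

Lemma pre_trans x y z : pre x y -> pre y z -> pre x z.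
Proof.
  move=> [R1 [P1 F1]] [R2 [P2 F2]]; exists (rcomp R1 R2); split; first exact: piso_rcomp.
  move=> a; have [b Hb] := F1 a; have [c Hc] := F2 b; by exists c, b.
Qed.

Lemma ple_refl x : ple x x.
Proof. left; exact: pre_refl. Qed.

Lemma pstr_pre x y z : pstr x y -> pre y z -> pstr x z.
Proof.
  move=> [R1 [a [b [P1 hd hr hl]]]] [R2 [P2 F2]].
  have P2' := P2; case: P2' => [k1 k2 k3 k4].
  have [c Hc] := F2 b.
  exists (rcomp R1 R2), a, c; split; first exact: piso_rcomp.
  - move=> a'; split.
    + move=> [c' [b' [H1 _]]]; apply/(hd a'); by exists b'.
    + move=> /(hd a') [b' H1]; have [c' H2] := F2 b'; by exists c', b'.
  - move=> c'; split.
    + move=> [a' [b' [H1 H2]]]; have hb : wlt b' b by apply/(hr b'); exists a'.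
      by apply/(k1 _ _ _ _ H2 Hc).
    + move=> hc; have [b' H2] := k3 _ _ _ Hc hc.
      have hb : wlt b' b by apply/(k1 _ _ _ _ H2 Hc).
      have [a' H1] := (proj2 (hr b')) hb; by exists a', b'.
  - by rewrite (k4 _ _ Hc) in hl.
Qed.

Lemma pre_pstr x y z : is_word y -> pre x y -> pstr y z -> ple x z.
Proof.
  move=> hy [R1 [P1 F1]] [R2 [a2 [b2 [P2 hd hr hl]]]].
  have P1' := P1; case: P1' => [h1 h2 h3 h4].
  case: (classic (exists a1, R1 a1 a2)) => [[a1 Ha1]|hn].
  - right; exists (rcomp R1 R2), a1, b2; split; first exact: piso_rcomp.
    + move=> a'; split.
      * move=> [c [b' [H1 H2]]]; have hb : wlt b' a2 by apply/(hd b'); exists c.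
        by apply/(h1 _ _ _ _ H1 Ha1).
      * move=> ha; have [b' H1] := F1 a'.
        have hb : wlt b' a2 by apply/(h1 _ _ _ _ H1 Ha1).
        have [c H2] := (proj2 (hd b')) hb; by exists c, b'.
    + move=> c'; split.
      * move=> [a' [b' [H1 H2]]]; apply/(hr c'); by exists b'.
      * move=> /(hr c') [b' H2]; have hb : wlt b' a2 by apply/(hd b'); exists c'.
        have [a' H1] := h3 _ _ _ Ha1 hb; by exists a', b'.
    + by rewrite (h4 _ _ Ha1).
  - left; exists (rcomp R1 R2); split; first exact: piso_rcomp.
    move=> a; have [b Hb] := F1 a.
    have hb : wlt b a2.
      case: (w_tot hy b a2) => [//|[e|hl']].
      - by subst; case: hn; exists a.
      - have [a' Ha'] := h3 _ _ _ Hb hl'; by case: hn; exists a'.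
    have [c Hc] := (proj2 (hd b)) hb; by exists c, b.
Qed.

Lemma pstr_pstr x y z : is_word y -> pstr x y -> pstr y z -> pstr x z.
Proof.
  move=> hy [R1 [a1 [b1 [P1 hd1 hr1 hl1]]]] [R2 [a2 [b2 [P2 hd2 hr2 hl2]]]].
  have P1' := P1; case: P1' => [h1 h2 h3 h4].
  have P2' := P2; case: P2' => [k1 k2 k3 k4].
  case: (w_tot hy b1 a2) => [hlt|[e|hlt]].
  - have [c Hc] := (proj2 (hd2 b1)) hlt.
    exists (rcomp R1 R2), a1, c; split; first exact: piso_rcomp.
    + move=> a'; split.
      * move=> [c' [b' [H1 _]]]; apply/(hd1 a'); by exists b'.
      * move=> /(hd1 a') [b' H1]; have hb : wlt b' b1 by apply/(hr1 b'); exists a'.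
        have [c' H2] := (proj2 (hd2 b')) (w_trans hy hb hlt); by exists c', b'.
    + move=> c'; split.
      * move=> [a' [b' [H1 H2]]]; have hb : wlt b' b1 by apply/(hr1 b'); exists a'.
        by apply/(k1 _ _ _ _ H2 Hc).
      * move=> hc; have [b' H2] := k3 _ _ _ Hc hc.
        have hb : wlt b' b1 by apply/(k1 _ _ _ _ H2 Hc).
        have [a' H1] := (proj2 (hr1 b')) hb; by exists a', b'.
    + by rewrite -(k4 _ _ Hc).
  - subst a2; exists (rcomp R1 R2), a1, b2; split; first exact: piso_rcomp.
    + move=> a'; split.
      * move=> [c' [b' [H1 _]]]; apply/(hd1 a'); by exists b'.
      * move=> /(hd1 a') [b' H1]; have hb : wlt b' b1 by apply/(hr1 b'); exists a'.
        have [c' H2] := (proj2 (hd2 b')) hb; by exists c', b'.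
    + move=> c'; split.
      * move=> [a' [b' [H1 H2]]]; apply/(hr2 c'); by exists b'.
      * move=> /(hr2 c') [b' H2]; have hb : wlt b' b1 by apply/(hd2 b'); exists c'.
        have [a' H1] := (proj2 (hr1 b')) hb; by exists a', b'.
    + exact: lab_lt_trans hl1 hl2.
  - have [as_ Has] := (proj2 (hr1 a2)) hlt.
    exists (rcomp R1 R2), as_, b2; split; first exact: piso_rcomp.
    + move=> a'; split.
      * move=> [c' [b' [H1 H2]]]; have hb : wlt b' a2 by apply/(hd2 b'); exists c'.
        by apply/(h1 _ _ _ _ H1 Has).
      * move=> ha; have [b' H1] := h2 _ _ _ Has ha.
        have hb : wlt b' a2 by apply/(h1 _ _ _ _ H1 Has).
        have [c' H2] := (proj2 (hd2 b')) hb; by exists c', b'.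
    + move=> c'; split.
      * move=> [a' [b' [H1 H2]]]; apply/(hr2 c'); by exists b'.
      * move=> /(hr2 c') [b' H2]; have hb : wlt b' a2 by apply/(hd2 b'); exists c'.
        have [a' H1] := h3 _ _ _ Has hb; by exists a', b'.
    + by rewrite (h4 _ _ Has).
Qed.

Lemma ple_trans x y z : is_word y -> ple x y -> ple y z -> ple x z.
Proof.
  move=> hy [H1|H1] [H2|H2].
  - left; exact: pre_trans H1 H2.
  - exact: pre_pstr H1 H2.
  - right; exact: pstr_pre H1 H2.
  - right; exact: pstr_pstr H1 H2.
Qed.

Lemma pre_ple x y : pre x y -> ple x y.
Proof. by left. Qed.

Section W2.
Variables x y : wd.
Hypotheses (hx : is_word x) (hy : is_word y).

Lemma same_dom R1 R2 (a : wcar x) (b1 b2 : wcar y) : piso R1 -> piso R2 ->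
  (forall a', (exists b', R1 a' b') <-> wlt a' a) ->
  (forall b', (exists a', R1 a' b') <-> wlt b' b1) ->
  (forall a', (exists b', R2 a' b') <-> wlt a' a) ->
  (forall b', (exists a', R2 a' b') <-> wlt b' b2) -> b1 = b2.
Proof.
  move=> P1 P2 hd1 hr1 hd2 hr2.
  case: (w_tot hy b1 b2) => [hl|[//|hl]].
  - have [a'' H2] := (proj2 (hr2 b1)) hl.
    have ha : wlt a'' a by apply/(hd2 a''); exists b1.
    have [c H1] := (proj2 (hd1 a'')) ha.
    have e := agree hx hy P1 P2 H1 H2; subst c.
    have hbb : wlt b1 b1 by apply/(hr1 b1); exists a''.
    by case: (w_irr hy hbb).
  - have [a'' H1] := (proj2 (hr1 b2)) hl.
    have ha : wlt a'' a by apply/(hd1 a''); exists b2.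
    have [c H2] := (proj2 (hd2 a'')) ha.
    have e := agree hx hy P1 P2 H1 H2; subst c.
    have hbb : wlt b2 b2 by apply/(hr2 b2); exists a''.
    by case: (w_irr hy hbb).
Qed.

Lemma no_str : ple x y -> pstr y x -> False.
Proof.
  move=> H [R' [a' [b' [P' hd' hr' hl']]]].
  have P'i := piso_inv P'.
  have P'' := P'; case: P'' => [k1 k2 k3 k4].
  case: H => [[R [P F]]|[R [a [b [P hd hr hl]]]]].
  - have [c Hc] := F b'.
    have e := ext hx hy P'i P (hr') (hd') Hc; subst c.
    case: P => _ _ _ h4; move: hl'; rewrite (h4 _ _ Hc); exact: lab_lt_irr.
  - have P0 := P; case: P0 => [h1 h2 h3 h4].
    case: (w_tot hx a b') => [hlt|[e|hlt]].
    + have [c Hc] := (proj2 (hr' a)) hlt.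
      have e := ext hx hy P P'i hd hr Hc; subst c.
      move: hl; rewrite -(k4 _ _ Hc); exact: lab_lt_irr.
    + subst b'.
      have e := same_dom P P'i hd hr hr' hd'; subst a'.
      exact: (lab_lt_irr (lab_lt_trans hl hl')).
    + have [c Hc] := (proj2 (hd b')) hlt.
      have e := ext hx hy P'i P hr' hd' Hc; subst c.
      move: hl'; rewrite -(h4 _ _ Hc); exact: lab_lt_irr.
Qed.

Lemma weq_of (R : wcar x -> wcar y -> Prop) : piso R -> pfull R -> psurj R -> weq x y.
Proof.
  move=> P F S; have P0 := P; case: P0 => [h1 h2 h3 h4].
  pose f a := proj1_sig (constructive_indefinite_description _ (F a)).
  pose g b := proj1_sig (constructive_indefinite_description _ (S b)).
  have Hf a : R a (f a) := proj2_sig (constructive_indefinite_description _ (F a)).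
  have Hg b : R (g b) b := proj2_sig (constructive_indefinite_description _ (S b)).
  exists f; split.
  - exists g.
    + move=> a; exact: (piso_inj hx hy P (Hg (f a)) (Hf a)).
    + move=> b; exact: (piso_func hx hy P (Hf (g b)) (Hg b)).
  - move=> a b; exact: h1.
  - move=> a; symmetry; exact: h4.
Qed.

End W2.

Section W3.
Variables x y : wd.
Hypotheses (hx : is_word x) (hy : is_word y).
Lemma antisym : ple x y -> ple y x -> weq x y.
Proof.
  move=> H1 H2; case: H2 => [[R' [P' F']]|H2]; last by case: (no_str hx hy H1 H2).
  case: H1 => [[R [P F]]|H1]; last first.
    by case: (no_str hy hx (or_introl (ex_intro _ R' (conj P' F'))) H1).
  apply: (weq_of hx hy P F) => b.
  have [a Ha] := F' b; exists a.
  have [c Hc] := F a.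
  have e := agree hx hy (piso_inv P') P Ha Hc; by subst c.
Qed.

Lemma pproper (R : wcar x -> wcar y -> Prop) : piso R -> pfull R -> ~ psurj R -> ple y x -> False.
Proof.
  move=> P F NS [[R' [P' F']]|H].
  - apply: NS => b; have [a Ha] := F' b; have [c Hc] := F a.
    have e := agree hy hy (piso_rcomp P' P) (piso_eq y) (ex_intro _ a (conj Ha Hc)) (erefl b).
    by subst c; exists a.
  - have Hs := pstr_pre H (ex_intro _ R (conj P F)).
    exact: (no_str hy hy (ple_refl y) Hs).
Qed.

End W3.

Lemma weq_piso (x y : wd) : weq x y -> exists R : wcar x -> wcar y -> Prop, [/\ piso R, pfull R & psurj R].
Proof.
  move=> [f [[g gf fg] hord hlab]]; exists (fun a b => f a = b); split.
  - split.
    + by move=> a b a' b' <- <-.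
    + by move=> a b a' _ _; exists (f a').
    + by move=> a b b' _ _; exists (g b'); rewrite fg.
    + by move=> a b <-.
  - by move=> a; exists (f a).
  - by move=> b; exists (g b); rewrite fg.
Qed.

Lemma weq_pre x y : weq x y -> pre x y.
Proof. move=> /weq_piso [R [P F _]]; by exists R. Qed.

Lemma weq_pre_sym x y : weq x y -> pre y x.
Proof.
  move=> /weq_piso [R [P F S]]; exists (rinv R); split; first exact: piso_inv.
  exact: S.
Qed.

Lemma prefix_pre p x : is_prefix p x -> pre p x.
Proof.
  move=> [z [_ [f [[g gf fg] hord hlab]]]].
  exists (fun a b => f b = inl a); split.
  - split.
    + by move=> a b a' b' H H'; rewrite hord H H'.
    + by move=> a b a' H H'; exists (g (inl a')); rewrite fg.
    + move=> a b b' H H'; move: H'; rewrite hord H.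
      by case E: (f b') => [a'|z'] //= _; exists a'.
    + by move=> a b H; rewrite -hlab H.
  - by move=> a; exists (g (inl a)); rewrite fg.
Qed.

Lemma pre_min (x y : wd) (R : wcar x -> wcar y -> Prop) (m : wcar x) (b : wcar y) : piso R -> R m b ->
  (forall a, ~ wlt a m) -> forall b', ~ wlt b' b.
Proof.
  move=> [h1 h2 h3 h4] H hm b' hb; have [a Ha] := h3 _ _ _ H hb.
  apply: (hm a); by apply/(h1 _ _ _ _ Ha H).
Qed.

Lemma min_family (x : wd) (K : Type) (Kp : K -> Prop) (S : K -> wcar x -> Prop) :
  is_word x -> (exists k, Kp k) -> (forall k a a', S k a -> wlt a' a -> S k a') ->
  exists k1, Kp k1 /\ forall k a, Kp k -> S k1 a -> S k a.
Proof.
  move=> hx [k0 Hk0] hS.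
  case: (classic (exists a k, Kp k /\ ~ S k a)) => [hex|hn]; last first.
    exists k0; split => // k a Hk _; apply: NNPP => hs; apply: hn; by exists a, k.
  have [m [[k1 [Hk1 Hm]] hmin]] := w_min hx hex.
  exists k1; split => // k a Hk Ha; apply: NNPP => hs.
  case: (w_tot hx a m) => [hl|[e|hl]].
  - apply: (hmin a) => //; by exists k.
  - by subst; case: Hm.
  - by apply: Hm; exact: hS Ha hl.
Qed.

End Gen2.


Section Gen3.
Context {d : Order.disp_t} {A : finOrderType d}.
Local Notation wd := (@word d A).

Lemma pre_split (x y : wd) (R : wcar x -> wcar y -> Prop) : is_word x -> is_word y ->
  piso R -> pfull R -> weq y (wcat x (wsub y (fun b => ~ exists a, R a b))).
Proof.
  move=> hx hy P F; have P0 := P; case: P0 => [h1 h2 h3 h4].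
  set Z := (fun b => ~ exists a, R a b).
  pose f (b : wcar y) : (wcar x + wcar (wsub y Z))%type :=
    match excluded_middle_informative (exists a, R a b) with
    | left h => inl (proj1_sig (constructive_indefinite_description _ h))
    | right h => inr (exist Z b h)
    end.
  have spec b : (exists a, R a b /\ f b = inl a) \/ (exists h : Z b, f b = inr (exist Z b h)).
    rewrite /f; case: (excluded_middle_informative _) => [h|h].
    - left; exists (proj1_sig (constructive_indefinite_description _ h)); split => //.
      exact: proj2_sig (constructive_indefinite_description _ h).
    - right; by exists h.
  pose g (s : (wcar x + wcar (wsub y Z))%type) : wcar y :=
    match s with
    | inl a => proj1_sig (constructive_indefinite_description _ (F a))
    | inr z => proj1_sig z end.
  have Hg a : R a (g (inl a)) := proj2_sig (constructive_indefinite_description _ (F a)).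
  exists f; split.
  - exists g.
    + move=> b; case: (spec b) => [[a [Ha ->]]|[h ->]] //=.
      exact: (piso_func hx hy P (Hg a) Ha).
    + move=> [a|[b h]] /=.
      * case: (spec (g (inl a))) => [[a' [Ha' ->]]|[h ->]].
        -- by rewrite (piso_inj hx hy P Ha' (Hg a)).
        -- by case: h; exists a.
      * case: (spec b) => [[a' [Ha' ->]]|[h' ->]].
        -- by case: h; exists a'.
        -- by rewrite (proof_irrelevance _ h' h).
  - move=> b b'; case: (spec b) => [[a [Ha ->]]|[h ->]];
      case: (spec b') => [[a' [Ha' ->]]|[h' ->]] /=.
    + apply: iff_sym; exact: h1.
    + split => // _; case: (w_tot hy b b') => [//|[e|hl]].
      * by subst; case: h'; exists a.
      * by have [a'' Ha''] := h3 _ _ _ Ha hl; case: h'; exists a''.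
    + split => // hl; have [a'' Ha''] := h3 _ _ _ Ha' hl; by case: h; exists a''.
    + done.
  - move=> b; case: (spec b) => [[a [Ha ->]]|[h ->]] //=; by rewrite (h4 _ _ Ha).
Qed.

Lemma pre_prefix (x y : wd) : is_word x -> is_word y -> pre x y -> is_prefix x y.
Proof.
  move=> hx hy [R [P F]]; eexists; split; last exact: pre_split hx hy P F.
  exact: is_word_sub.
Qed.

Lemma wsub_pre (x : wd) (S1 S2 : wcar x -> Prop) :
  (forall b, S1 b -> S2 b) -> (forall b b', S1 b -> S2 b' -> wlt b' b -> S1 b') ->
  exists R : wcar (wsub x S1) -> wcar (wsub x S2) -> Prop,
    [/\ piso R, pfull R & (forall b c, R b c <-> proj1_sig b = proj1_sig c)].
Proof.
  move=> h12 hd; exists (fun b c => proj1_sig b = proj1_sig c); split => //.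
  - split.
    + by move=> [a ?] [b ?] [a' ?] [b' ?] /= -> ->.
    + move=> [a ha] [b hb] [a' ha'] /= e _; by exists (exist _ a' (h12 _ ha')).
    + move=> [a ha] [b hb] [b' hb'] /= e hl; subst.
      by exists (exist _ b' (hd _ _ ha hb' hl)).
    + by move=> [a ?] [b ?] /= ->.
  - move=> [a ha]; by exists (exist _ a (h12 _ ha)).
Qed.

Lemma wsub_ple (x : wd) (S1 S2 : wcar x -> Prop) :
  (forall b, S1 b -> S2 b) -> (forall b b', S1 b -> S2 b' -> wlt b' b -> S1 b') ->
  pre (wsub x S1) (wsub x S2).
Proof. move=> h1 h2; have [R [P F _]] := wsub_pre h1 h2; by exists R. Qed.

Lemma prime_suffix (p : wd) (S : wcar p -> Prop) : is_word p -> prime_word p ->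
  (forall a a', S a -> wlt a' a -> S a') -> (exists a, S a) -> (exists a, ~ S a) ->
  lexle p (wsub p (fun b => ~ exists a : wcar (wsub p S), proj1_sig a = b)).
Proof.
  move=> hp [_ hpr] hS [a0 h0] [a1 h1].
  set R := (fun (a : wcar (wsub p S)) (b : wcar p) => proj1_sig a = b).
  have P : piso R.
    split; rewrite /R.
    + by move=> [a ?] b [a' ?] b' /= <- <-.
    + move=> [a ha] b a' /= e hl; by exists (proj1_sig a').
    + move=> [a ha] b b' /= e hl; subst; by exists (exist _ b' (hS _ _ ha hl)).
    + by move=> [a ?] b /= <-.
  have F : pfull R by move=> a; exists (proj1_sig a).
  apply: hpr; first exact: is_word_sub.
  exists (wsub p S); split.
  - exact: is_word_sub.
  - exact: (inhabits (exist _ a0 h0)).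
  - apply: inhabits; exists a1; move=> [[a ha] /= e]; subst; exact: h1 ha.
  - exact: (pre_split (is_word_sub S hp) hp P F).
Qed.



Lemma strlt_pstr (x y : wd) : strlt x y -> pstr x y.
Proof.
  move=> [a [b [Y [Z [Z' [hab _ _ _ [[f [[g gf fg] hord hlab]] [f' [[g' gf' fg'] hord' hlab']]]]]]]]].
  set R := (fun c c' => exists u : wcar Y, f c = inl (inl u) /\ f' c' = inl (inl u)).
  exists R, (g (inl (inr tt))), (g' (inl (inr tt))); split.
  - split; rewrite /R.
    + move=> c c' e e' [u [H1 H2]] [v [H3 H4]].
      by rewrite hord hord' H1 H2 H3 H4.
    + move=> c c' e [u [H1 H2]] hl; move: hl; rewrite hord H1.
      case E: (f e) => [[v|t]|z] //= _.
      exists (g' (inl (inl v))), v; by rewrite fg'.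
    + move=> c c' e' [u [H1 H2]] hl; move: hl; rewrite hord' H2.
      case E: (f' e') => [[v|t]|z] //= _.
      exists (g (inl (inl v))), v; by rewrite fg.
    + move=> c c' [u [H1 H2]]; by rewrite -hlab -(hlab' c') H1 H2.
  - move=> c; split.
    + move=> [c' [u [H1 _]]]; by rewrite hord H1 fg.
    + rewrite hord fg; case E: (f c) => [[v|t]|z] //= _.
      exists (g' (inl (inl v))), v; by rewrite fg'.
  - move=> c'; split.
    + move=> [c [u [_ H2]]]; by rewrite hord' H2 fg'.
    + rewrite hord' fg'; case E: (f' c') => [[v|t]|z] //= _.
      exists (g (inl (inl v))), v; by rewrite fg.
  - by rewrite -hlab -hlab' fg fg'.
Qed.

Lemma lexle_ple (x y : wd) : lexle x y -> ple x y.
Proof.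
  case=> [H|H]; [left; exact: prefix_pre | right; exact: strlt_pstr].
Qed.

Lemma prime_suffix_ple (p : wd) (S : wcar p -> Prop) : is_word p -> prime_word p ->
  (forall a a', S a -> wlt a' a -> S a') -> (exists a, S a) -> (exists a, ~ S a) ->
  ple p (wsub p (fun b => ~ S b)).
Proof.
  move=> hp hpr hS h0 h1.
  have H := lexle_ple (prime_suffix hp hpr hS h0 h1).
  apply: (ple_trans (is_word_sub _ hp) H); left; apply: wsub_ple.
  - move=> b hb hs; apply: hb; by exists (exist _ b hs).
  - move=> b b' hb hb' _ [[a ha] /= e]; subst; exact: hb' ha.
Qed.

End Gen3.


Lemma cwo_inj T (lt : T -> T -> Prop) : is_cwo lt -> exists f : T -> nat, injective f.
Proof. by case. Qed.
Lemma cwo_irr T (lt : T -> T -> Prop) : is_cwo lt -> forall a, ~ lt a a.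
Proof. by case. Qed.
Lemma cwo_trans T (lt : T -> T -> Prop) : is_cwo lt -> forall a b c, lt a b -> lt b c -> lt a c.
Proof. by case. Qed.
Lemma cwo_wf T (lt : T -> T -> Prop) : is_cwo lt -> well_founded lt.
Proof. by case. Qed.

Section WP.
Context {d : Order.disp_t} {A : finOrderType d}.
Local Notation wd := (@word d A).
Variables (I : Type) (ltI : I -> I -> Prop) (u : I -> wd).
Hypotheses (hI : is_cwo ltI) (hu : forall i, is_word (u i)).
Local Notation W := (wprod ltI u).

Lemma ltW_same i (a b : wcar (u i)) :
  wlt (existT (fun i => wcar (u i)) i a : wcar W) (existT _ i b) <-> wlt a b.
Proof.
  split.
  - case=> [/= h|[i' [a' [b' [e1 e2 h]]]]]; first by case: (cwo_irr hI h).
    have E := f_equal (@projT1 _ _) e1; simpl in E; subst i'.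
    apply inj_pairT2 in e1; apply inj_pairT2 in e2; by subst.
  - move=> h; right; by exists i, a, b.
Qed.

Lemma ltW_proj (x y : wcar W) : wlt x y -> ltI (projT1 x) (projT1 y) \/ projT1 x = projT1 y.
Proof.
  case=> [h|[i [a [b [e1 e2 _]]]]]; [by left | right; by subst].
Qed.

Lemma ltW_diff (x y : wcar W) : projT1 x <> projT1 y -> (wlt x y <-> ltI (projT1 x) (projT1 y)).
Proof.
  move=> ne; split; [case/ltW_proj => // | by left].
Qed.

Lemma ltW_diff' i j (a : wcar (u i)) (b : wcar (u j)) : i <> j ->
  (wlt (existT (fun i => wcar (u i)) i a : wcar W) (existT _ j b) <-> ltI i j).
Proof. move=> ne; exact: (ltW_diff (x:=existT _ i a) (y:=existT _ j b) ne). Qed.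

Lemma ltW_I (x y : wcar W) : ltI (projT1 x) (projT1 y) -> wlt x y.
Proof. by left. Qed.

Lemma ltW_notI (x y : wcar W) : wlt x y -> ~ ltI (projT1 y) (projT1 x).
Proof.
  move=> hxy h'; case: (ltW_proj hxy) => h.
  - have h2 := cwo_trans hI h h'. exact: (cwo_irr hI h2).
  - rewrite h in h'. exact: (cwo_irr hI h').
Qed.

Lemma wprod_word : is_word W.
Proof.
  have [gI hgI] := cwo_inj hI.
  pose F i := proj1_sig (constructive_indefinite_description _ (cwo_inj (hu i))).
  have HF i : injective (F i) := proj2_sig (constructive_indefinite_description _ (cwo_inj (hu i))).
  split.
  - exists (fun x : wcar W => pickle (gI (projT1 x), F (projT1 x) (projT2 x))).
    move=> [i a] [j b] /= /(pcan_inj (@pickleK_inv _)) [/hgI e]; subst j.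
    by move=> /HF ->.
  - move=> [i a] /ltW_same h; exact: (w_irr (hu i) h).
  - move=> [i a] [j b] [k c] h1 h2.
    case: (classic (i = j)) => [e|ne].
    + subst j; move/ltW_same: h1 => h1.
      case: (classic (i = k)) => [e|ne].
      * subst k; apply/ltW_same; move/ltW_same: h2 => h2; exact: (w_trans (hu i) h1 h2).
      * by left; move/(ltW_diff' _ _ ne): h2.
    + move/(ltW_diff' _ _ ne): h1 => /= h1.
      case: (classic (j = k)) => [e|ne'].
      * by subst k; left.
      * left; move/(ltW_diff' _ _ ne'): h2 => /= h2; exact: (cwo_trans hI h1 h2).
  - move=> [i a] [j b] ne.
    case: (classic (i = j)) => [e|ne'].
    + subst j; case: (w_tot (hu i) a b) => [h|[e|h]].
      * by left; apply/ltW_same.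
      * by subst.
      * by right; apply/ltW_same.
    + case: (cwo_tot hI i j) => [h|[//|h]]; [by left; left | by right; left].
  - move=> [i a]; elim: (cwo_wf hI i) a => {}i _ IHi a.
    elim: (w_wf (hu i) a) => {}a _ IHa.
    constructor => [[j b]] h.
    case: (classic (j = i)) => [e|ne].
    + subst j; apply: IHa; exact/ltW_same.
    + move/(ltW_diff' _ _ ne): h => /= h; exact: IHi.
Qed.

End WP.


Section WP2.
Context {d : Order.disp_t} {A : finOrderType d}.
Local Notation wd := (@word d A).
Variables (I : Type) (ltI : I -> I -> Prop) (u : I -> wd).
Hypotheses (hI : is_cwo ltI) (hu : forall i, is_word (u i)).
Local Notation W := (wprod ltI u).

Definition ltJ (E : I -> Prop) : {i | E i} -> {i | E i} -> Prop :=
  fun j j' => ltI (proj1_sig j) (proj1_sig j').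

Lemma ltJ_cwo (E : I -> Prop) : is_cwo (@ltJ E).
Proof.
  apply: (cwo_inv (f := @proj1_sig I E)) => //.
  move=> [a ?] [b ?] /= e; subst; f_equal; exact: proof_irrelevance.
Qed.

Lemma pow_weq (x c : wd) (E : I -> Prop) (R : wcar x -> wcar W -> Prop) :
  is_word x -> is_word c ->
  (forall a b a' b', R a b -> R a' b' -> (wlt a a' <-> wlt b b')) ->
  (forall a b, R a b -> wlab a = wlab b) ->
  pfull R -> (forall b, (exists a, R a b) <-> E (projT1 b)) ->
  (forall i, E i -> weq (u i) c) ->
  weq x (wpow (@ltJ E) c).
Proof.
  move=> hx hc hord hlab hF hran hE.
  pose G i (e : wcar (u i)) (c' : wcar c) :=
    exists Q : wcar (u i) -> wcar c -> Prop, [/\ piso Q, pfull Q & Q e c'].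
  have HG i : E i -> exists Q : wcar (u i) -> wcar c -> Prop,
      [/\ piso Q, pfull Q, psurj Q & forall e c', G i e c' <-> Q e c'].
    move=> hi; have [Q [P F S]] := weq_piso (hE i hi); exists Q; split => // e c'; split.
    - move=> [Q' [P' F' H']]; have [c2 H2] := F e; by rewrite (agree (hu i) hc P' P H' H2).
    - move=> H; by exists Q.
  have hJ := ltJ_cwo E.
  have hpw : is_word (wpow (@ltJ E) c) by apply: wprod_word => // _.
  set R2 := (fun a (y : wcar (wpow (@ltJ E) c)) => exists e : wcar (u (proj1_sig (projT1 y))),
               R a (existT (fun i => wcar (u i)) (proj1_sig (projT1 y)) e) /\ G _ e (projT2 y)).
  have F2 : pfull R2.
    move=> a; have [w Hw] := hF a; move: w Hw => [i e] Hw.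
    have hi : E i by apply/(hran (existT _ i e)); exists a.
    have [Q [P F S HQ]] := HG i hi; have [c1 Hc1] := F e.
    exists (existT (fun _ => wcar c) (exist E i hi) c1); exists e; split => //; exact/HQ.
  have S2 : psurj R2.
    move=> [[i hi] c1]; have [Q [P F S HQ]] := HG i hi; have [e He] := S c1.
    have [a Ha] := (proj2 (hran (existT _ i e))) hi.
    exists a; exists e; split => //; exact/HQ.
  have P2 : piso R2.
    split.
    - move=> a [[i hi] c1] a' [[i' hi'] c2] [e [H1 G1]] [e' [H1' G1']].
      simpl in e, e', H1, H1', G1, G1'.
      apply: (iff_trans (hord _ _ _ _ H1 H1')).
      case: (classic (i = i')) => [eq|ne].
      + subst i'; have e0 := proof_irrelevance _ hi' hi; subst hi'.
        have [Q [P F S HQ]] := HG i hi. move/HQ: G1 => G1; move/HQ: G1' => G1'.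
        case: P => h1 _ _ _.
        apply: (iff_trans (ltW_same hI e e')).
        apply: (iff_trans (h1 _ _ _ _ G1 G1')).
        apply: iff_sym; exact: (ltW_same hJ (u := fun _ => c) c1 c2).
      + apply: (iff_trans (ltW_diff' ltI e e' ne)).
        have ne' : exist E i hi <> exist E i' hi' by move=> [].
        apply: iff_sym; exact: (ltW_diff' (@ltJ E) (u := fun _ => c) c1 c2 ne').
    - move=> a b a' _ _; exact: F2.
    - move=> a b b' _ _; exact: S2.
    - move=> a [[i hi] c1] [e [H1 G1]]; simpl in e, H1, G1.
      rewrite (hlab _ _ H1) /=.
      have [Q [P F S HQ]] := HG i hi; move/HQ: G1 => G1; case: P => _ _ _ h4; exact: h4 _ _ G1.
  exact: (weq_of hx hpw P2 F2 S2).
Qed.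

End WP2.


Section Gen6.
Context {d : Order.disp_t} {A : finOrderType d}.
Local Notation wd := (@word d A).

Lemma pstr_pre_left (y x s : wd) : pstr y x -> pre y s -> pstr s x.
Proof.
  move=> [R1 [a [b [P1 hd1 hr1 hl1]]]] [R [P F]].
  have P0 := P; case: P0 => [h1 h2 h3 h4].
  have [c Hc] := F a.
  exists (rcomp (rinv R) R1), c, b; split.
  - exact: piso_rcomp (piso_inv P) P1.
  - move=> c'; split.
    + move=> [b' [a' [H H1]]]; rewrite /rinv in H.
      have ha : wlt a' a by apply/(hd1 a'); exists b'.
      by apply/(h1 _ _ _ _ H Hc).
    + move=> hc; have [a' H] := h3 _ _ _ Hc hc.
      have ha : wlt a' a by apply/(h1 _ _ _ _ H Hc).
      have [b' H1] := (proj2 (hd1 a')) ha; by exists b', a'.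
  - move=> b'; split.
    + move=> [c' [a' [H H1]]]; apply/(hr1 b'); by exists a'.
    + move=> /(hr1 b') [a' H1]; have [c' H] := F a'; by exists c', a'.
  - by rewrite -(h4 _ _ Hc).
Qed.

Lemma st1 (y x s : wd) : is_word x -> is_word s ->
  ple y x -> ple x s -> pre y s -> pre y x.
Proof.
  move=> hx hs [H|H] Hxs Hys => //.
  by case: (no_str hx hs Hxs (pstr_pre_left H Hys)).
Qed.

End Gen6.

Section Main.
Context {d : Order.disp_t} {A : finOrderType d}.
Local Notation wd := (@word d A).
Variables (I : Type) (ltI : I -> I -> Prop) (u : I -> wd).
Hypotheses (hI : is_cwo ltI) (hu : forall i, is_word (u i)).
Variable i0 : I.
Hypothesis hi0 : forall j, ~ ltI j i0.
Hypothesis hprime : forall i, prime_word (u i).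
Hypothesis hdense : dense_nonincr ltI u.
Local Notation W := (wprod ltI u).
Local Notation Wc := (wcar (wprod ltI u)).
Definition mkW (i : I) (e : wcar (u i)) : Wc := existT (fun i => wcar (u i)) i e.

Lemma hW : is_word W.
Proof. exact: wprod_word hI hu. Qed.

Lemma I_irr i : ~ ltI i i.
Proof. by case: hI => _ h _ _ _; apply: h. Qed.
Lemma I_trans i j k : ltI i j -> ltI j k -> ltI i k.
Proof. by case: hI => _ _ h _ _; apply: h. Qed.
Lemma I_tot i j : ltI i j \/ i = j \/ ltI j i.
Proof. exact: cwo_tot hI i j. Qed.
Lemma I_wf : well_founded ltI.
Proof. by case: hI. Qed.
Lemma i0_le j : j = i0 \/ ltI i0 j.
Proof. case: (I_tot j i0) => [h|[e|h]]; [by case: (hi0 h) | by left | by right]. Qed.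

Lemma u_ne i : exists e : wcar (u i), True.
Proof.
  apply: NNPP => hn.
  have hc : is_cwo (fun _ _ : False => False).
    split.
    + by exists (fun f : False => match f with end) => a.
    + by [].
    + by [].
    + by move=> [].
    + by move=> [].
  have ff : wcar (u i) -> False by move=> a; apply: hn; by exists a.
  have hw : weq (u i) (wpow (fun _ _ : False => False) (u i)).
    exists (fun a => match ff a with end); split.
    + exists (fun y : wcar (wpow (fun _ _ : False => False) (u i)) => match projT1 y with end).
      * by move=> a; case: (ff a).
      * by move=> [[]].
    + by move=> a; case: (ff a).
    + by move=> a; case: (ff a).
  have [[j0 _] _] := (proj1 (hprime i)) False (fun _ _ => False) (u i) hc (hu i) hw.
  by case: j0.
Qed.

Definition mn (i : I) : wcar (u i) :=
  proj1_sig (constructive_indefinite_description _ (w_min (hu i) (u_ne i))).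
Lemma mn_min i (a : wcar (u i)) : ~ wlt a (mn i).
Proof.
  have [_ H] := proj2_sig (constructive_indefinite_description _ (w_min (hu i) (u_ne i))).
  exact: H.
Qed.

Lemma ltW_sameM i (a b : wcar (u i)) : wlt (mkW a) (mkW b) <-> wlt a b.
Proof. exact: ltW_same. Qed.

Lemma W_prefix_u0 : is_prefix (u i0) W.
Proof.
  apply: pre_prefix (hu i0) hW _.
  exists (fun e w => w = mkW e); split.
  - split.
    + move=> a b a' b' -> ->; apply: iff_sym; exact: ltW_sameM.
    + by move=> a b a' _ _; exists (mkW a').
    + move=> a b b' -> /ltW_proj [h|h]; first by case: (hi0 h).
      move: b' h => [j e] /= h; subst j; by exists e.
    + by move=> a b ->.
  - by move=> a; exists (mkW a).
Qed.

Variable p : wd.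
Hypotheses (hp : is_word p) (hpp : prime_word p).
Variable R : wcar p -> Wc -> Prop.
Hypotheses (PR : piso R) (FR : pfull R).

Definition Pp (w : Wc) := exists a, R a w.

Lemma h1R a w a' w' : R a w -> R a' w' -> (wlt a a' <-> wlt w w').
Proof. by case: PR => h _ _ _; apply: h. Qed.
Lemma h4R a w : R a w -> wlab a = wlab w.
Proof. by case: PR => _ _ _ h; apply: h. Qed.

Lemma P_down w w' : Pp w -> wlt w' w -> Pp w'.
Proof. move=> [a Ha] h; case: PR => _ _ h3 _; exact: h3 _ _ _ Ha h. Qed.

Lemma caseA : (forall w, Pp w -> projT1 w = i0) -> is_prefix p (u i0).
Proof.
  move=> hA; apply: pre_prefix hp (hu i0) _.
  exists (fun a e => R a (mkW e)); split.
  - split.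
    + move=> a e a' e' H H'; apply: (iff_trans (h1R H H')); exact: ltW_sameM.
    + move=> a e a' H hl; case: PR => _ h2 _ _; have [w' Hw'] := h2 _ _ _ H hl.
      have := hA w' (ex_intro _ a' Hw'); move: w' Hw' => [j e'] /= Hw' ej; subst j.
      by exists e'.
    + move=> a e e' H hl; have hl' : wlt (mkW e') (mkW e) by apply/ltW_sameM.
      case: PR => _ _ h3 _; exact: h3 _ _ _ H hl'.
    + move=> a e H; exact: h4R H.
  - move=> a; have [w Hw] := FR a.
    have := hA w (ex_intro _ a Hw); move: w Hw => [j e] /= Hw ej; subst j.
    by exists e.
Qed.

Variable w1 : Wc.
Hypotheses (Hw1 : Pp w1) (Hne1 : projT1 w1 <> i0).

Lemma lt_i0_w1 : ltI i0 (projT1 w1).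
Proof. by case: (i0_le (projT1 w1)) => [e|//]; case: Hne1. Qed.

Lemma B0_P (e : wcar (u i0)) : Pp (mkW e).
Proof. apply: P_down Hw1 _; apply: ltW_I => /=; exact: lt_i0_w1. Qed.

Definition Dset b := exists e : wcar (u b), Pp (mkW e).
Definition Fset b := forall e : wcar (u b), Pp (mkW e).

Lemma F_D b : Fset b -> Dset b.
Proof. by move=> H; exists (mn b). Qed.

Lemma D_F b b' : Dset b -> ltI b' b -> Fset b'.
Proof. move=> [e He] h e'; apply: P_down He _; exact: ltW_I. Qed.

Lemma F_i0 : Fset i0.
Proof. exact: B0_P. Qed.

Definition Qs (q w : Wc) := Pp w /\ ~ wlt w q.
Definition qb b : Wc := mkW (mn b).

Lemma notlt_qb b (w : Wc) : ~ wlt w (qb b) -> ~ ltI (projT1 w) b.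
Proof. by move=> h h'; apply: h; apply: ltW_I. Qed.

Lemma key_le q : Pp q -> projT1 q <> i0 -> ple (u i0) (wsub W (Qs q)).
Proof.
  move=> [aq Haq] hq.
  have hi0q : ltI i0 (projT1 q) by case: (i0_le (projT1 q)) => [e|//]; case: hq.
  have hpS : ple p (wsub p (fun b => ~ wlt b aq)).
    apply: prime_suffix_ple hp hpp _ _ _.
    - move=> a a' h1 h2; exact: (w_trans hp h2 h1).
    - have [a0 H0] := B0_P (mn i0); exists a0; apply/(h1R H0 Haq); exact: ltW_I.
    - exists aq; exact: (w_irr hp).
  have H1 : pre (u i0) p.
    exists (fun e a => R a (mkW e)); split.
    - split.
      + move=> e a e' a' H H'; apply: iff_sym; apply: (iff_trans (h1R H H')); exact: ltW_sameM.
      + move=> e a e' H hl; have hl' : wlt (mkW e') (mkW e) by apply/ltW_sameM.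
        case: PR => _ _ h3 _; exact: h3 _ _ _ H hl'.
      + move=> e a a' H hl; case: PR => _ h2 _ _; have [w' Hw'] := h2 _ _ _ H hl.
        have hw : wlt w' (mkW e) by apply/(h1R Hw' H).
        case: (ltW_proj hw) => [h|]; first by case: (hi0 h).
        move: w' Hw' hw => [j e'] /= Hw' _ ej; subst j; by exists e'.
      + move=> e a H; symmetry; exact: h4R H.
    - move=> e; exact: B0_P.
  have H2 : pre (wsub p (fun b => ~ wlt b aq)) (wsub W (Qs q)).
    have side a w : R a w -> ~ wlt a aq -> Qs q w.
      move=> H ha; split; first by exists a.
      move=> hw; apply: ha; by apply/(h1R H Haq).
    exists (fun s t => R (proj1_sig s) (proj1_sig t)); split.
    - split.
      + move=> [a ?] [w ?] [a' ?] [w' ?] /= H H'; exact: h1R H H'.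
      + move=> [a ha] [w hw] [a' ha'] /= H hl; have [w' Hw'] := FR a'.
        by exists (exist _ w' (side _ _ Hw' ha')).
      + move=> [a ha] [w hw] [w' hw'] /= H hl; case: PR => _ _ h3 _.
        have [a' Ha'] := h3 _ _ _ H hl.
        have ha' : ~ wlt a' aq.
          move=> h; case: hw' => _; apply; by apply/(h1R Ha' Haq).
        by exists (exist _ a' ha').
      + move=> [a ?] [w ?] /= H; exact: h4R H.
    - move=> [a ha]; have [w Hw] := FR a; by exists (exist _ w (side _ _ Hw ha)).
  apply: ple_trans hp (pre_ple H1) _.
  exact: ple_trans (is_word_sub _ hp) hpS (pre_ple H2).
Qed.

Definition Brel b (e : wcar (u b)) (s : wcar (wsub W (Qs (qb b)))) := proj1_sig s = mkW e.

Lemma blk b : Fset b ->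
  [/\ piso (@Brel b), pfull (@Brel b) & forall s, (exists e, Brel (b:=b) e s) <-> projT1 (proj1_sig s) = b].
Proof.
  move=> Fb; have side (e : wcar (u b)) : Qs (qb b) (mkW e).
    split; first exact: Fb.
    move/ltW_sameM; exact: mn_min.
  split.
  - split; rewrite /Brel.
    + move=> e [w ?] e' [w' ?] /= -> ->; apply: iff_sym; exact: ltW_sameM.
    + move=> e s e' _ _; by exists (exist _ (mkW e') (side e')).
    + move=> e [w hw] [w' hw'] /= He hl; subst w.
      case: (ltW_proj hl) => [h|].
      * by case: (notlt_qb (proj2 hw') h).
      * move: w' hw' hl => [j e'] /= hw' hl ej; subst j; by exists e'.
    + by move=> e [w ?] /= ->.
  - move=> e; by exists (exist _ (mkW e) (side e)).
  - move=> [w hw] /=; split; first by move=> [e He]; rewrite /Brel /= in He; subst w.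
    move: w hw => [j e] /= hw ej; subst j; by exists e.
Qed.

Lemma pre_of_C b : Fset b -> ple (u b) (u i0) -> pre (u b) (u i0).
Proof.
  move=> Fb H; case: (classic (b = i0)) => [->|nb]; first exact: pre_refl.
  have Pq : Pp (qb b) by exact: Fb.
  have [Pb Fb' _] := blk Fb.
  apply: st1 (hu i0) (is_word_sub _ hW) H (key_le Pq nb) _.
  by exists (@Brel b).
Qed.

Definition Spre b (m : wcar (u i0)) :=
  exists Q : wcar (u b) -> wcar (u i0) -> Prop, [/\ piso Q, pfull Q & exists e, Q e m].

Lemma Spre_down b m m' : Spre b m -> wlt m' m -> Spre b m'.
Proof.
  move=> [Q [P F [e He]]] hl; case: (P) => _ _ h3 _; have [e' He'] := h3 _ _ _ He hl.
  exists Q; split => //; by exists e'.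
Qed.

Lemma Spre_iff b (Q0 : wcar (u b) -> wcar (u i0) -> Prop) m : piso Q0 -> pfull Q0 ->
  Spre b m <-> exists e, Q0 e m.
Proof.
  move=> P0 F0; split.
  - move=> [Q [P F [e He]]]; exists e; have [m' Hm'] := F0 e.
    by rewrite (agree (hu b) (hu i0) P P0 He Hm').
  - move=> H; by exists Q0.
Qed.

Lemma Spre_incl b b' : pre (u b) (u i0) -> pre (u b') (u i0) ->
  (forall m, Spre b m -> Spre b' m) -> pre (u b) (u b').
Proof.
  move=> [Q [P F]] [Q' [P' F']] H.
  exists (rcomp Q (rinv Q')); split; first exact: piso_rcomp P (piso_inv P').
  move=> e; have [m Hm] := F e.
  have [e' He'] := (proj1 (Spre_iff m P' F')) (H m (ex_intro _ Q (And3 P F (ex_intro _ e Hm)))).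
  by exists e', m.
Qed.

Lemma Spre_all b : pre (u b) (u i0) -> (forall m, Spre b m) -> pre (u i0) (u b).
Proof.
  move=> [Q [P F]] H; exists (rinv Q); split; first exact: piso_inv.
  move=> m; have [e He] := (proj1 (Spre_iff m P F)) (H m); by exists e.
Qed.

Lemma Spre_i0 m : Spre i0 m.
Proof.
  exists (fun a b => a = b); split; [exact: piso_eq | by move=> a; exists a | by exists m].
Qed.

Lemma next_ex b : exists g' : option I, forall c, below ltI c g' <-> (c = b \/ ltI c b).
Proof.
  case: (classic (exists j, ltI b j)) => [hex|hn].
  - have [n [hn hmin]] := cwo_min hI hex.
    exists (Some n) => c /=; split.
    + move=> hc; case: (I_tot c b) => [h|[e|h]]; [by right | by left | ].
      by case: (hmin c h).
    + by case=> [->|h] //; exact: I_trans h hn.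
  - exists None => c /=; split => // _.
    case: (I_tot c b) => [h|[e|h]]; [by right | by left | ].
    by case: hn; exists c.
Qed.

Lemma claimC b : Dset b -> forall g, g = b \/ ltI g b -> ple (u b) (u g).
Proof.
  elim: (I_wf b) => {}b _ IH Db.
  case: (classic (b = i0)) => [->|nb].
    by move=> g [->|h]; [exact: ple_refl | case: (hi0 h)].
  have F_lt c : ltI c b -> Fset c := fun h => D_F Db h.
  have Cc c : ltI c b -> forall g, g = c \/ ltI g c -> ple (u c) (u g) :=
    fun h => IH c h (F_D (F_lt c h)).
  have prec c : ltI c b -> pre (u c) (u i0).
    move=> h; apply: pre_of_C (F_lt c h) _; apply: Cc h i0 _.
    by case: (i0_le c) => [->|h']; [left | right].
  have hi0b : ltI i0 b by case: (i0_le b) => [e|//]; case: nb.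
  have [c0 [hc0 hmin]] := min_family (hu i0) (ex_intro (fun c => ltI c b) i0 hi0b) Spre_down.
  have pre0 c : ltI c b -> pre (u c0) (u c).
    move=> h; apply: Spre_incl (prec c0 hc0) (prec c h) _ => m; exact: hmin c m h.
  have Hb : ple (u b) (u c0).
    have [g' Hg'] := next_ex b.
    have HD := hdense (g:=c0) (g':=g') (proj2 (Hg' c0) (or_intror hc0)).
    case: HD => [H|[b1 [b2 [Hb1 Hb12 Hb2 Hlt]]]].
    - left; apply: weq_pre; apply: H; [by right | exact: (proj2 (Hg' b) (or_introl erefl))].
    - move/Hg': Hb2 => Hb2.
      have hb1 : ltI b1 b by case: Hb2 => [<-|h]; [exact Hb12 | exact: I_trans Hb12 h].
      have hx1 : c0 = b1 \/ ltI c0 b1 by case: Hb1 => [e|h]; [left; by rewrite e | right].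
      have h1 : ple (u b1) (u c0) := Cc b1 hb1 c0 hx1.
      case: Hlt => Hle Hnw.
      case: Hb2 => [e2|hb2].
      + subst b2; exact: ple_trans (hu b1) (lexle_ple Hle) h1.
      + case: Hnw; apply: antisym (hu b2) (hu b1) (lexle_ple Hle) _.
        exact: ple_trans (hu c0) h1 (pre_ple (pre0 b2 hb2)).
  move=> g [->|hg]; first exact: ple_refl.
  case: (I_tot g c0) => [h|[e|h]].
  - exact: ple_trans (hu c0) Hb (Cc c0 hc0 g (or_intror h)).
  - by subst.
  - exact: ple_trans (hu c0) Hb (pre_ple (pre0 g hg)).
Qed.

Lemma lt_of_ne_notlt i j : i <> j -> ~ ltI i j -> ltI j i.
Proof. move=> ne nl; case: (I_tot i j) => [h|[e|h]] //; by case: ne. Qed.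

Section HH.
Hypothesis HF : forall b, Dset b -> Fset b.
Variable c0 : I.
Hypotheses (Dc0 : Dset c0) (nc0 : c0 <> i0).
Variable m_ : wcar (u i0).
Hypothesis hm_ : ~ Spre c0 m_.
Hypothesis hw : forall r, Dset r -> ~ ltI r c0 -> weq (u r) (u c0).

Local Notation S0 := (wsub W (Qs (qb c0))).

Definition mkS (w : Wc) (h : Qs (qb c0) w) : wcar S0 := exist _ w h.

Lemma hS0 : is_word S0.
Proof. exact: is_word_sub _ hW. Qed.

Lemma preD b : Dset b -> pre (u b) (u i0).
Proof.
  move=> Db; apply: pre_of_C (HF Db) _; apply: claimC Db i0 _.
  by case: (i0_le b) => [->|h]; [left | right].
Qed.

Lemma inS r (e : wcar (u r)) : Dset r -> ~ ltI r c0 -> Qs (qb c0) (mkW e).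
Proof.
  move=> Dr nr; split; first exact: (HF Dr e).
  case: (classic (r = c0)) => [ec|ne].
  - subst r; move/ltW_sameM; exact: mn_min.
  - move/(ltW_diff' ltI e (mn c0) ne); exact: nr.
Qed.

Lemma sD (y : wcar S0) : Dset (projT1 (proj1_sig y)).
Proof. move: y => [[j e] [hP _]] /=; by exists e. Qed.

Lemma sN (y : wcar S0) : ~ ltI (projT1 (proj1_sig y)) c0.
Proof. move: y => [w [_ hn]] /=; exact: notlt_qb hn. Qed.

Lemma preR r : Dset r -> ~ ltI r c0 -> exists Q : wcar (u r) -> wcar (u i0) -> Prop,
  [/\ piso Q, pfull Q & forall e m, Q e m -> Spre c0 m].
Proof.
  move=> Dr nr; have [Q1 [P1 F1 _]] := weq_piso (hw Dr nr).
  have [Q0 [P0 F0]] := preD Dc0.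
  exists (rcomp Q1 Q0); split.
  - exact: piso_rcomp P1 P0.
  - move=> e; have [e' He'] := F1 e; have [m Hm] := F0 e'; by exists m, e'.
  - move=> e m [e' [_ H]]; exists Q0; split => //; by exists e'.
Qed.

Lemma blockin (Rx : wcar (u i0) -> wcar S0 -> Prop) : piso Rx ->
  forall (Q0 : wcar (u c0) -> wcar (u i0) -> Prop), piso Q0 -> pfull Q0 ->
  forall e m y, Q0 e m -> Rx m y -> proj1_sig y = mkW e.
Proof.
  move=> PX Q0 P0 F0 e m y H0 Hy.
  have [PB FB RB] := blk (HF Dc0).
  have PK := piso_rcomp (piso_inv P0) PB.
  have [y' Hy'] := FB e.
  have Hk : rcomp (rinv Q0) (@Brel c0) m y' by exists e.
  rewrite (agree (hu i0) hS0 PX PK Hy Hk); exact: Hy'.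
Qed.

Lemma caseII : pstr (u i0) S0 -> False.
Proof.
  move=> [Rx [a [b [PX hd hr hl]]]].
  have PX' := PX; case: PX' => [x1 x2 x3 x4].
  have [Q0 [P0 F0]] := preD Dc0.
  have hb_D := sD b; have hb_N := sN (y:=b).
  move: b hd hr hl hb_D hb_N => [[r eb] hb] hd hr hl /= Dr nr.
  case: (classic (r = c0)) => [er|ner].
  - subst r.
    have [mb Hmb] := F0 eb.
    have [PB FB RB] := blk (HF Dc0).
    have PK := piso_rcomp (piso_inv P0) PB.
    have Hk : rinv (rcomp (rinv Q0) (@Brel c0)) (mkS hb) mb.
      by exists eb; split.
    have e := ext hS0 (hu i0) (piso_inv PX) (piso_inv PK) hr hd Hk; subst mb.
    move: hl; rewrite /=.
    case: P0 => _ _ _ h4; rewrite -(h4 _ _ Hmb); exact: lab_lt_irr.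
  - have hc0r : ltI c0 r := lt_of_ne_notlt ner nr.
    pose ys0 : wcar S0 := mkS (inS (mn r) Dr nr).
    set Sx := fun a' => exists y, Rx a' y /\ wlt y ys0.
    have Sdown : forall a1 a2, Sx a1 -> wlt a2 a1 -> Sx a2.
      move=> a1 a2 [y [Hy hy]] hl2; have [y2 Hy2] := x2 _ _ _ Hy hl2.
      have h' : wlt y2 y by apply/(x1 _ _ _ _ Hy2 Hy).
      exists y2; split => //; exact: (w_trans hS0 h' hy).
    have hSx : exists a', Sx a'.
      have [m0 Hm0] := F0 (mn c0).
      have hyb : Qs (qb c0) (mkW (mn c0)) := inS (mn c0) Dc0 (@I_irr c0).
      pose yb : wcar S0 := mkS hyb.
      have hyb_b : wlt yb (mkS hb) by apply: ltW_I.
      have [m' Hm'] := (proj2 (hr yb)) hyb_b.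
      have := blockin PX P0 F0 Hm0; move=> Hbl.
      exists m', yb; split => //; by apply: ltW_I.
    have hnSx : exists a', ~ Sx a'.
      exists a => [[y [Hy _]]]; have : wlt a a by apply/(hd a); exists y.
      move=> hh; exact: (w_irr (hu i0) hh).
    have Hz := prime_suffix_ple (hu i0) (hprime i0) Sdown hSx hnSx.
    set z := wsub (u i0) (fun b => ~ Sx b) in Hz.
    have hz : is_word z := is_word_sub _ (hu i0).
    have na : ~ Sx a.
      move=> [y [Hy _]]; have : wlt a a by apply/(hd a); exists y.
      move=> hh; exact: (w_irr (hu i0) hh).
    set Z := fun (a' : wcar z) (e : wcar (u r)) => exists y, Rx (proj1_sig a') y /\ proj1_sig y = mkW e.
    have key : forall (a' : wcar z) y, Rx (proj1_sig a') y -> projT1 (proj1_sig y) = r.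
      move=> [a' ha'] y /= Hy.
      have h1 : ~ ltI (projT1 (proj1_sig y)) r.
        move=> h; apply: ha'; exists y; split => //; exact: ltW_I.
      have h2 : ~ ltI r (projT1 (proj1_sig y)).
        have : wlt y (mkS hb) by apply/(hr y); exists a'.
        move/ltW_notI; exact.
      by case: (I_tot (projT1 (proj1_sig y)) r) => [h|[e|h]]; [case: (h1 h) | | case: (h2 h)].
    have nSx_of : forall (e : wcar (u r)) a'' (hq : Qs (qb c0) (mkW e)),
        Rx a'' (mkS hq) -> ~ Sx a''.
      move=> e a'' hq H [y [Hy hy]].
      have ey := piso_func (hu i0) hS0 PX Hy H; subst y.
      move: hy => /ltW_sameM; exact: mn_min.
    have PZ : piso Z.
      split; rewrite /Z.
      - move=> a1 e1 a2 e2 [y1 [H1 E1]] [y2 [H2 E2]].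
        apply: (iff_trans (x1 _ _ _ _ H1 H2)).
        rewrite /= E1 E2; exact: ltW_sameM.
      - move=> a1 e1 a2 [y1 [H1 E1]] hl2.
        have [y2 Hy2] := x2 _ _ _ H1 hl2.
        have := key a2 _ Hy2; move: Hy2; case: y2 => [[j e2] h2] /= Hy2 ej; subst j.
        by exists e2, (exist _ _ h2).
      - move=> a1 e1 e2 [y1 [H1 E1]] hl2.
        have hq := inS e2 Dr nr.
        have hlt : wlt (mkS hq) y1 by rewrite /= E1; apply/ltW_sameM.
        have [a2 Ha2] := x3 _ _ _ H1 hlt.
        by exists (exist _ a2 (nSx_of _ _ hq Ha2)), (exist _ _ hq).
      - move=> a1 e1 [y1 [H1 E1]]; change (wlab (proj1_sig a1) = wlab e1); rewrite (x4 _ _ H1).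
        change (wlab (proj1_sig y1) = wlab e1); by rewrite E1.
    have Hs : pstr z (u r).
      exists Z, (exist _ a na), eb; split => //.
      - move=> a1; split.
        + move=> [e1 [y1 [H1 _]]]; apply/(hd (proj1_sig a1)); by exists y1.
        + move=> /= /(hd (proj1_sig a1)) [y1 H1].
          have := key a1 _ H1; move: H1; case: y1 => [[j e1] h1] /= H1 ej; subst j.
          by exists e1, (exist _ _ h1).
      - move=> e1; split.
        + move=> [a1 [y1 [H1 E1]]].
          have : wlt y1 (mkS hb) by apply/(hr y1); exists (proj1_sig a1).
          rewrite /= E1; by move/ltW_sameM.
        + move=> he; have hq := inS e1 Dr nr.
          have hlt : wlt (mkS hq) (mkS hb) by apply/ltW_sameM.
          have [a2 Ha2] := (proj2 (hr _)) hlt.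
          by exists (exist _ a2 (nSx_of _ _ hq Ha2)), (exist _ _ hq).
    have [Qr [Pr Fr _]] := preR Dr nr.
    have Hs2 := pstr_pre Hs (ex_intro _ Qr (conj Pr Fr)).
    exact: no_str (hu i0) hz Hz Hs2.
Qed.

Lemma caseI : pre (u i0) S0 -> False.
Proof.
  move=> [Rx [PX FX]].
  have PX' := PX; case: PX' => [x1 x2 x3 x4].
  have [Q0 [P0 F0]] := preD Dc0.
  set ranR := fun (w : Wc) => exists a y, Rx a y /\ proj1_sig y = w.
  have inblk : forall e : wcar (u c0), ranR (mkW e).
    move=> e; have [m Hm] := F0 e; have [y Hy] := FX m.
    exists m, y; split => //; exact: (blockin PX P0 F0 Hm Hy).
  have nsurjQ0 : ~ (exists e, Q0 e m_).
    by move=> [e He]; apply: hm_; exists Q0; split => //; exists e.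
  case: (classic (exists r (e1 e2 : wcar (u r)), ranR (mkW e1) /\ ~ ranR (mkW e2)))
    => [[r [e1 [e2 [He1 He2]]]]|hnp].
  - have [a1 [y1 [Hy1 Ey1]]] := He1.
    have Dr : Dset r by have := sD y1; rewrite Ey1; exact.
    have nr : ~ ltI r c0 by have := sN (y:=y1); rewrite Ey1; exact.
    have ner : r <> c0 by move=> e; subst r; exact: He2 (inblk e2).
    have hc0r := lt_of_ne_notlt ner nr.
    pose ys0 : wcar S0 := mkS (inS (mn r) Dr nr).
    have [x0 Hx0] : exists x0, Rx x0 ys0.
      case: (w_tot (hu r) (mn r) e1) => [h|[e|h]].
      + have hl : wlt ys0 y1 by rewrite /= Ey1; apply/ltW_sameM.
        exact: x3 _ _ _ Hy1 hl.
      + exists a1; have -> : ys0 = y1 by apply: sub_eq; rewrite /= Ey1 e.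
        done.
      + by case: (mn_min h).
    set Sx := fun a' => exists y, Rx a' y /\ wlt y ys0.
    have Sdown : forall a1 a2, Sx a1 -> wlt a2 a1 -> Sx a2.
      move=> b1 b2 [y [Hy hy]] hl2; have [y2 Hy2] := x2 _ _ _ Hy hl2.
      have h' : wlt y2 y by apply/(x1 _ _ _ _ Hy2 Hy).
      exists y2; split => //; exact: (w_trans hS0 h' hy).
    have hSx : exists a', Sx a'.
      have [m0 Hm0] := F0 (mn c0); have [y Hy] := FX m0.
      exists m0, y; split => //.
      have Ey := blockin PX P0 F0 Hm0 Hy.
      change (wlt (proj1_sig y) (mkW (mn r))); rewrite Ey; exact: ltW_I.
    have hnSx : exists a', ~ Sx a'.
      exists x0 => [[y [Hy hy]]].
      have ey := piso_func (hu i0) hS0 PX Hy Hx0; subst y.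
      exact: (w_irr hS0 hy).
    have Hz := prime_suffix_ple (hu i0) (hprime i0) Sdown hSx hnSx.
    set z := wsub (u i0) (fun b => ~ Sx b) in Hz.
    have hz : is_word z := is_word_sub _ (hu i0).
    have key : forall (a' : wcar z) y, Rx (proj1_sig a') y -> projT1 (proj1_sig y) = r.
      move=> [a' ha'] y /= Hy.
      have h1 : ~ ltI (projT1 (proj1_sig y)) r.
        move=> h; apply: ha'; exists y; split => //; exact: ltW_I.
      have h2 : ~ ltI r (projT1 (proj1_sig y)).
        move=> h; apply: He2.
        have hq := inS e2 Dr nr.
        have hl : wlt (mkS hq) y by apply: ltW_I.
        have [a'' Ha''] := x3 _ _ _ Hy hl; by exists a'', (mkS hq).
      by case: (I_tot (projT1 (proj1_sig y)) r) => [h|[e|h]]; [case: (h1 h) | | case: (h2 h)].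
    have nSx_of : forall (e : wcar (u r)) a'' (hq : Qs (qb c0) (mkW e)),
        Rx a'' (mkS hq) -> ~ Sx a''.
      move=> e a'' hq H [y [Hy hy]].
      have ey := piso_func (hu i0) hS0 PX Hy H; subst y.
      move: hy => /ltW_sameM; exact: mn_min.
    set Z := fun (a' : wcar z) (e : wcar (u r)) => exists y, Rx (proj1_sig a') y /\ proj1_sig y = mkW e.
    have FZ : pfull Z.
      move=> a2; have [y2 Hy2] := FX (proj1_sig a2).
      have := key a2 _ Hy2; move: Hy2; case: y2 => [[j e2'] h2] /= Hy2 ej; subst j.
      by exists e2', (exist _ _ h2).
    have PZ : piso Z.
      split; rewrite /Z.
      - move=> b1 f1 b2 f2 [y3 [H1 E1]] [y2 [H2 E2]].
        apply: (iff_trans (x1 _ _ _ _ H1 H2)).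
        rewrite /= E1 E2; exact: ltW_sameM.
      - move=> b1 f1 b2 _ _; exact: FZ.
      - move=> b1 f1 f2 [y3 [H1 E1]] hl2.
        have hq := inS f2 Dr nr.
        have hlt : wlt (mkS hq) y3 by rewrite /= E1; apply/ltW_sameM.
        have [b2 Hb2] := x3 _ _ _ H1 hlt.
        by exists (exist _ b2 (nSx_of _ _ hq Hb2)), (mkS hq).
      - move=> b1 f1 [y3 [H1 E1]]; change (wlab (proj1_sig b1) = wlab f1); rewrite (x4 _ _ H1).
        change (wlab (proj1_sig y3) = wlab f1); by rewrite E1.
    have [Qr [Pr Fr Hr]] := preR Dr nr.
    have PP := piso_rcomp PZ Pr. have XX := pproper (hu i0) PP.
    apply: XX Hz.
    + move=> a2; have [f Hf] := FZ a2; have [m Hm] := Fr f; by exists m, f.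
    + move=> hs; have [a2 [f [_ Hf]]] := hs m_; exact: hm_ (Hr _ _ Hf).
  - set E := fun r => exists e : wcar (u r), ranR (mkW e).
    have hall : forall r, E r -> forall e : wcar (u r), ranR (mkW e).
      move=> r [f1 Hf1] f2; apply: NNPP => Hf2; apply: hnp; by exists r, f1, f2.
    set R' := fun a (w : Wc) => exists y, Rx a y /\ proj1_sig y = w.
    have Hw : weq (u i0) (wpow (ltJ ltI (E:=E)) (u c0)).
      apply: (pow_weq hI hu (x := u i0) (c := u c0) (E := E) (R := R') (hu i0) (hu c0)).
      - move=> a w a' w' [y [Hy <-]] [y' [Hy' <-]]; exact: x1 _ _ _ _ Hy Hy'.
      - move=> a w [y [Hy <-]]; exact: x4 _ _ Hy.
      - move=> a; have [y Hy] := FX a; by exists (proj1_sig y), y.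
      - move=> [j e]; split.
        + move=> [a [y [Hy Ey]]]; exists e, a, y; done.
        + move=> hE; have [a [y [Hy Ey]]] := hall j hE e; by exists a, y.
      - move=> r [e [a [y [Hy Ey]]]]; apply: hw.
        + have := sD y; rewrite Ey; exact.
        + have := sN (y:=y); rewrite Ey; exact.
    have [_ Hcx] := (proj1 (hprime i0)) _ _ (u c0) (ltJ_cwo hI E) (hu c0) Hw.
    apply: (pproper (hu i0) P0 F0) (pre_ple (weq_pre_sym Hcx)).
    move=> hs; have [e He] := hs m_; apply: nsurjQ0; by exists e.
Qed.

Lemma lemmaH : False.
Proof.
  have Pq : Pp (qb c0) := HF Dc0 (mn c0).
  case: (key_le Pq nc0) => [H|H]; [exact: caseI H | exact: caseII H].
Qed.

End HH.

Lemma caseK k : Dset k -> ~ Fset k -> False.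
Proof.
  move=> Dk nFk.
  have nk : k <> i0 by move=> e; subst k; exact: nFk F_i0.
  have [e2 ne2] : exists e : wcar (u k), ~ Pp (mkW e).
    apply: NNPP => h; apply: nFk => e; apply: NNPP => h'; apply: h; by exists e.
  have Hk : ple (u k) (u i0).
    apply: claimC Dk i0 _; by case: (i0_le k) => [->|h]; [left | right].
  have Pq : Pp (qb k).
    case: Dk => e1 He1; case: (w_tot (hu k) (mn k) e1) => [h|[e|h]].
    - apply: P_down He1 _; exact/ltW_sameM.
    - by rewrite /qb e.
    - by case: (mn_min h).
  have H1 := key_le Pq nk.
  set t := wsub (u k) (fun e => Pp (mkW e)).
  have ht : is_word t := is_word_sub _ (hu k).
  have keyk : forall w, Qs (qb k) w -> projT1 w = k.
    move=> w [hP hn]; have h1 := notlt_qb hn.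
    case: (I_tot (projT1 w) k) => [h|[e|h]] //; first (try by case: (h1 h)).
    case: ne2; apply: P_down hP _; exact: ltW_I.
  set Rk := fun (s : wcar (wsub W (Qs (qb k)))) (t' : wcar t) => proj1_sig s = mkW (proj1_sig t').
  have Fk : pfull Rk.
    move=> [w hw]; have := keyk w hw; move: w hw => [j e] hw /= ej; subst j.
    by exists (exist _ e (proj1 hw)).
  have H2 : pre (wsub W (Qs (qb k))) t.
    exists Rk; split => //; split; rewrite /Rk.
    - move=> s1 t1 s2 t2 E E'.
      change (wlt (proj1_sig s1) (proj1_sig s2) <-> wlt (proj1_sig t1) (proj1_sig t2)).
      rewrite E E'; exact: ltW_sameM.
    - move=> s1 t1 s2 _ _; exact: Fk.
    - move=> s1 t1 t2 E hl.
      have hq : Qs (qb k) (mkW (proj1_sig t2)).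
        split; first exact: (proj2_sig t2).
        move/ltW_sameM; exact: mn_min.
      by exists (exist _ _ hq).
    - move=> s1 t1 E; change (wlab (proj1_sig s1) = wlab (proj1_sig t1)); by rewrite E.
  have H3 : ple (u i0) t := ple_trans (is_word_sub _ hW) H1 (pre_ple H2).
  have H4 : ple (u k) t := ple_trans (hu i0) Hk H3.
  have Pinc : piso (fun (e : wcar t) (e' : wcar (u k)) => proj1_sig e = e').
    split.
    + by move=> [a ?] b [a' ?] b' /= <- <-.
    + by move=> [a ?] b a' _ _; exists (proj1_sig a').
    + move=> [a ha] b b' /= E hl; subst b.
      have hb' : Pp (mkW b') by apply: P_down ha _; exact/ltW_sameM.
      by exists (exist _ b' hb').
    + by move=> [a ?] b /= <-.
  apply: (pproper (hu k) Pinc) H4.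
  - by move=> e; exists (proj1_sig e).
  - move=> hs; have [[e he] /= E] := hs e2; subst; exact: ne2 he.
Qed.

Lemma caseNK : (forall b, Dset b -> Fset b) -> False.
Proof.
  move=> HF.
  have preD' b : Dset b -> pre (u b) (u i0) := preD HF (b:=b).
  have Dc : exists c, Dset c := ex_intro _ i0 (F_D F_i0).
  have [c0 [Dc0 hmin]] := min_family (hu i0) Dc Spre_down.
  have pre0 c : Dset c -> pre (u c0) (u c).
    move=> h; apply: Spre_incl (preD' c0 Dc0) (preD' c h) _ => m; exact: hmin c m h.
  have hw r : Dset r -> ~ ltI r c0 -> weq (u r) (u c0).
    move=> Dr nr; apply: antisym (hu r) (hu c0) _ (pre_ple (pre0 r Dr)).
    have hx : c0 = r \/ ltI c0 r.
      case: (I_tot r c0) => [h|[e|h]]; [by case: nr | left; by rewrite e | by right].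
    exact: (claimC Dr hx).
  case: (classic (forall m, Spre c0 m)) => [hall|hn].
  - have hwi r : Dset r -> weq (u r) (u i0).
      move=> Dr; apply: antisym (hu r) (hu i0) _ _.
      + apply: claimC Dr i0 _; by case: (i0_le r) => [->|h]; [left | right].
      + apply: pre_ple; apply: Spre_all (preD' r Dr) _ => m; exact: hmin r m Dr (hall m).
    have Hw : weq p (wpow (ltJ ltI (E:=Dset)) (u i0)).
      apply: (pow_weq hI hu (x := p) (c := u i0) (E := Dset) (R := R) hp (hu i0)).
      - move=> a w a' w'; exact: h1R.
      - move=> a w; exact: h4R.
      - exact: FR.
      - move=> [j e]; split.
        + move=> [a Ha]; by exists e, a.
        + move=> Dj; exact: (HF j Dj e).
      - exact: hwi.
    have [[j0 Hj0] _] := (proj1 hpp) _ _ (u i0) (ltJ_cwo hI Dset) (hu i0) Hw.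
    have D1 : Dset (projT1 w1).
      exists (projT2 w1); have E : mkW (projT2 w1) = w1 by case: w1.
      by rewrite E.
    have e1 := Hj0 (exist _ i0 (F_D F_i0)); have e2 := Hj0 (exist _ (projT1 w1) D1).
    rewrite -e2 in e1; case: e1 => e; apply: Hne1; by rewrite -e.
  - have [m_ hm_] : exists m, ~ Spre c0 m.
      apply: NNPP => h; apply: hn => m; apply: NNPP => h'; apply: h; by exists m.
    have nc0 : c0 <> i0 by move=> e; subst; apply: hm_ (Spre_i0 m_).
    exact: (lemmaH HF Dc0 nc0 hm_ hw).
Qed.

Lemma caseB : False.
Proof.
  case: (classic (exists k, Dset k /\ ~ Fset k)) => [[k [Dk nFk]]|hn].
  - exact: caseK Dk nFk.
  - apply: caseNK => b Db; apply: NNPP => nF; apply: hn; by exists b.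
Qed.

End Main.

Unset Implicit Arguments.

Theorem mainTheorem8 (d : Order.disp_t) (A : finOrderType d)
  (I : Type) (ltI : I -> I -> Prop) (u : I -> @word d A)
  (hI : is_cwo ltI) (hu : forall i, is_word (u i))
  (i0 : I) (hi0 : forall j, ~ ltI j i0)
  (hprime : forall i, prime_word (u i))
  (hdense : dense_nonincr ltI u) :
  [/\ is_prefix (u i0) (wprod ltI u), prime_word (u i0)
    & forall p : @word d A, is_word p -> prime_word p ->
        is_prefix p (wprod ltI u) -> is_prefix p (u i0)].
Proof.
  split.
  - exact: (W_prefix_u0 hI hu hi0).
  - exact: hprime i0.
  - move=> p hp hpp Hpre.
    have [R [PR FR]] := prefix_pre Hpre.
    case: (classic (exists w, (exists a, R a w) /\ projT1 w <> i0)) => [[w1 [Hw1 Hne1]]|hn].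
    + exfalso; exact: (caseB hI hu hi0 hprime hdense hp hpp PR FR (w1 := w1) Hw1 Hne1).
    + apply: (caseA hI hu hp PR FR) => w Hw; apply: NNPP => ne; apply: hn; by exists w.
Qed.
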